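(* Let $M:\alpha\mapsto M_\alpha$ be a matroid flock on a finite set $E$, and let $\alpha,\beta\in\mathbb{Z}^E$. If $M_\alpha=M_\beta$, then there is a walk $\gamma^0,\ldots,\gamma^k\in\mathbb{Z}^E$ from $\alpha=\gamma^0$ to $\beta=\gamma^k$ such that $M_{\gamma^i}=M_\alpha$ for $i=0,\ldots,k$, and for each $i\in\{1,\ldots,k\}$ there is a set $J_i\subseteq E$ with $\gamma^i-\gamma^{i-1}=\pm e_{J_i}$.
   Context: $e_J:=\sum_{i\in J}e_i$ ($e_i$ unit vectors), $\mathbf{1}:=e_E$. A matroid flock of rank $d$ on $E$ is a map $M$ assigning to each $\alpha\in\mathbb{Z}^E$ a matroid $M_\alpha$ on $E$ of rank $d$ with (MF1) $M_\alpha/i=M_{\alpha+e_i}\setminus i$ for all $\alpha\in\mathbb{Z}^E$, $i\in E$ (contraction, deletion); and (MF2) $M_\alpha=M_{\alpha+\mathbf{1}}$ for all $\alpha$. *)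

(* Defs.v *)
From mathcomp Require Import all_boot all_order all_algebra.
Set Implicit Arguments. Unset Strict Implicit. Unset Printing Implicit Defensive.
Import GRing.Theory.
Local Open Scope ring_scope.

Definition is_matroid (E : finType) (B : {set {set E}}) : Prop :=
  B != set0 /\
  forall B1 B2, B1 \in B -> B2 \in B -> forall x, x \in B1 :\: B2 ->
    exists2 y, y \in B2 :\: B1 & (y |: (B1 :\ x)) \in B.

Definition is_matroid_rank (E : finType) (d : nat) (B : {set {set E}}) : Prop :=
  is_matroid B /\ forall X, X \in B -> #|X| = d.

(* Deletion M \ i, a matroid on E - i (bases are subsets of E avoiding i). *)
Definition mdelete (E : finType) (B : {set {set E}}) (i : E) : {set {set E}} :=
  if [exists X in B, i \notin X] then [set X in B | i \notin X]
  else [set X :\ i | X in B].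

Definition mcontract (E : finType) (B : {set {set E}}) (i : E) : {set {set E}} :=
  if [exists X in B, i \in X] then [set X :\ i | X in B & i \in X]
  else B.

Definition unitv (E : finType) (i : E) : {ffun E -> int} :=
  [ffun j => (j == i)%:R].
Definition indv (E : finType) (J : {set E}) : {ffun E -> int} :=
  [ffun j => (j \in J)%:R].

Definition is_matroid_flock (E : finType) (d : nat)
    (M : {ffun E -> int} -> {set {set E}}) : Prop :=
  (forall a, is_matroid_rank d (M a)) /\
  (forall a i, mcontract (M a) i = mdelete (M (a + unitv i)) i) /\
  (forall a, M a = M (a + indv [set: E])).

(* Main.v *)
Require Import Defs.
From mathcomp Require Import all_boot all_order all_algebra.
From mathcomp Require Import zify ring.
Import GRing.Theory.
Set Implicit Arguments. Unset Strict Implicit.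

Definition rk (E : finType) (N : {set {set E}}) (X : {set E}) : nat :=
  (\max_(B in N) #|B :&: X|)%N.

Lemma rk_ge (E : finType) (N : {set {set E}}) X B : B \in N -> #|B :&: X| <= rk N X.
Proof. move=> HB; rewrite /rk; exact: (@leq_bigmax_cond _ (fun B => B \in N) (fun B => #|B :&: X|) B HB). Qed.

Lemma rk_le (E : finType) (N : {set {set E}}) X m :
  (forall B, B \in N -> #|B :&: X| <= m) -> rk N X <= m.
Proof. move=> H; apply/bigmax_leqP => B HB; exact: H. Qed.

Lemma rk_att (E : finType) (N : {set {set E}}) X : N != set0 ->
  exists2 B, B \in N & rk N X = #|B :&: X|.
Proof.
move=> HN. have : 0 < #|N| by rewrite card_gt0.
move=> /(eq_bigmax_cond (fun B => #|B :&: X|)) [B HB E1]. by exists B.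
Qed.

Lemma rk_sub (E : finType) (N N' : {set {set E}}) X :
  (forall B, B \in N -> B \in N') -> rk N X <= rk N' X.
Proof. move=> H; apply: rk_le => B HB; apply: rk_ge; exact: H. Qed.

Lemma bases_card (E : finType) d (N : {set {set E}}) :
  is_matroid_rank d N -> forall B, B \in N -> #|B| = d.
Proof. by case. Qed.

Lemma card_exch (E : finType) (B0 X : {set E}) x y :
  (x \in X -> y \in X) -> y \notin B0 -> #|B0 :&: X| <= #|(y |: (B0 :\ x)) :&: X|.
Proof.
move=> Hxy Hy.
case Hx: (x \in X).
- have Hy' := Hxy Hx.
  have S : y |: ((B0 :&: X) :\ x) \subset (y |: (B0 :\ x)) :&: X.
    apply/subsetP => z; rewrite !inE.
    case: (z == y) /eqP => [->|_] /=; first by rewrite Hy'.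
    by case: (z != x); case: (z \in B0); case: (z \in X).
  apply: leq_trans (subset_leq_card S).
  have Hn : y \notin (B0 :&: X) :\ x by rewrite !inE (negbTE Hy) andbF.
  rewrite cardsU1 Hn (cardsD1 x (B0 :&: X)).
  by case: (x \in B0 :&: X).
- apply: subset_leq_card; apply/subsetP => z; rewrite !inE.
  case/andP => zB zX; rewrite zB zX andbT.
  case: (z == x) /eqP => [Ezx|]; last by rewrite orbT.
  by rewrite Ezx Hx in zX.
Qed.

Lemma card_diff_sym (E : finType) (B1 B2 : {set E}) : #|B1| = #|B2| -> #|B1 :\: B2| = #|B2 :\: B1|.
Proof. move=> H. have := cardsID B2 B1; have := cardsID B1 B2; rewrite setIC; lia. Qed.

Lemma dual_exch (E : finType) d (N : {set {set E}}) : is_matroid_rank d N ->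
  forall n B1 B2, #|B2 :\: B1| = n -> B1 \in N -> B2 \in N ->
  forall y, y \in B2 :\: B1 -> exists2 x, x \in B1 :\: B2 & y |: (B1 :\ x) \in N.
Proof.
move=> HM; have Hc := bases_card HM; case: HM => [[_ HBE] _].
elim=> [|n IH] B1 B2 Hn HB1 HB2 y Hy.
  by move/eqP: Hn; rewrite cards_eq0 => /eqP E0; rewrite E0 inE in Hy.
case: (boolP [exists z in B2 :\: B1, z != y]).
- case/exists_inP => z Hz zy.
  have [w Hw HB2'] := HBE B2 B1 HB2 HB1 z Hz.
  have Eq : (w |: (B2 :\ z)) :\: B1 = (B2 :\: B1) :\ z.
    apply/setP => u; rewrite !inE.
    case: (u =P w) => [->|_] /=; last by case: (u != z); case: (u \in B1).
    move: Hw; rewrite inE => /andP [_ ->]; by rewrite andbF.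
  have Hn' : #|(w |: (B2 :\ z)) :\: B1| = n.
    by move: Hn; rewrite Eq (cardsD1 z (B2 :\: B1)) Hz; lia.
  have Hy' : y \in (w |: (B2 :\ z)) :\: B1.
    by rewrite Eq !inE eq_sym zy; move: Hy; rewrite inE.
  have [x Hx HN] := IH B1 _ Hn' HB1 HB2' y Hy'.
  exists x => //.
  move: Hx Hz; rewrite !inE => /andP [Hx1 Hx2] /andP [Hz1 Hz2].
  rewrite Hx2 andbT. apply/negP => xB2.
  move: Hx1; rewrite negb_or xB2 andbT => /andP [_ /negP]; apply; apply/eqP => Exz.
  by move: Hz1; rewrite -Exz Hx2.
- move/exists_inPn => Hall.
  have H1 : #|B2 :\: B1| = 1%N.
    have -> : B2 :\: B1 = [set y].
      apply/setP => u; rewrite inE; case: (boolP (u \in B2 :\: B1)) => Hu.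
        by have := Hall u Hu; rewrite negbK eq_sym.
      by apply/esym/eqP => Euy; rewrite Euy Hy in Hu.
    by rewrite cards1.
  have H2 : #|B1 :\: B2| == 1%N by rewrite card_diff_sym ?H1 // !Hc.
  case/cards1P: H2 => x Ex.
  have Hx : x \in B1 :\: B2 by rewrite Ex inE.
  exists x => //.
  have -> : y |: (B1 :\ x) = B2; last by [].
  apply/setP => u; rewrite !inE.
  move: Hx Hy; rewrite !inE => /andP [xB2 xB1] /andP [yB1 yB2].
  case: (u =P y) => [->|Nuy] /=; first by rewrite yB2.
  case: (u =P x) => [->|Nux] /=; first by rewrite (negbTE xB2).
  case uB1: (u \in B1); case uB2: (u \in B2) => //.
  + have : u \in B1 :\: B2 by rewrite inE uB1 uB2.
    by rewrite Ex inE => /eqP.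
  + have := Hall u; rewrite inE uB1 uB2 /= negbK => /(_ isT) /eqP.
    by move=> /Nuy.
Qed.

Lemma F1 (E : finType) d (N : {set {set E}}) (X : {set E}) i C : is_matroid_rank d N ->
  i \in X -> C \in N -> i \in C -> exists2 B, B \in N & (i \in B) && (rk N X <= #|B :&: X|).
Proof.
move=> HM iX HC iC.
have HN : N != set0 by case: HM => [[]].
have [B0 HB0 EB0] := rk_att X HN.
case iB0: (i \in B0); first by exists B0 => //; rewrite iB0 EB0 leqnn.
have Hi : i \in C :\: B0 by rewrite inE iB0 iC.
have [x Hx HB'] := dual_exch HM (erefl _) HB0 HC Hi.
exists (i |: (B0 :\ x)) => //.
rewrite !inE eqxx /= EB0; apply: card_exch => //; by rewrite iB0.
Qed.

Lemma F2 (E : finType) d (N : {set {set E}}) (X : {set E}) i C : is_matroid_rank d N ->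
  i \notin X -> C \in N -> i \notin C -> exists2 B, B \in N & (i \notin B) && (rk N X <= #|B :&: X|).
Proof.
move=> HM iX HC iC.
have HN : N != set0 by case: HM => [[]].
have [B0 HB0 EB0] := rk_att X HN.
case iB0: (i \in B0); last by exists B0 => //; rewrite iB0 EB0 leqnn.
case: HM => [[_ HBE] _].
have Hi : i \in B0 :\: C by rewrite inE iB0 iC.
have [y Hy HB'] := HBE B0 C HB0 HC i Hi.
exists (y |: (B0 :\ i)) => //.
rewrite EB0 !inE eqxx /=; apply/andP; split.
  rewrite orbF eq_sym; apply/eqP => Eiy; move: Hy; by rewrite inE Eiy (negbTE iC) andbF.
apply: card_exch; first by rewrite (negbTE iX).
by move: Hy; rewrite inE => /andP [].
Qed.

Lemma setD1_inj (E : finType) (A B : {set E}) i :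
  i \in A -> i \in B -> A :\ i = B :\ i -> A = B.
Proof. by move=> iA iB H; rewrite -(setD1K iA) -(setD1K iB) H. Qed.

Lemma S1 (E : finType) d (N N' : {set {set E}}) i :
  is_matroid_rank d N -> is_matroid_rank d N' -> mcontract N i = mdelete N' i ->
  (exists2 B, B \in N & i \in B) -> forall B, (B \in N') = (B \in N) && (i \in B).
Proof.
move=> HM HM' Hc [B0 HB0 iB0].
have Hcard := bases_card HM; have Hcard' := bases_card HM'.
have Hex : [exists X in N, i \in X] by apply/exists_inP; exists B0.
move: Hc; rewrite /mcontract /mdelete Hex.
case: ifP => [/exists_inP [X HX iX] | Hno] Hc.
  have : X \in [set X in N' | i \notin X] by rewrite inE HX iX.
  rewrite -Hc => /imsetP [Y]; rewrite inE => /andP [HY iY] EX.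
  have := Hcard' X HX; have := Hcard Y HY; rewrite EX (cardsD1 i Y) iY; lia.
have allin : forall X, X \in N' -> i \in X.
  move=> X HX; apply/negPn/negP => iX; move/negbT: Hno; rewrite negb_exists_in.
  by move/forall_inP => /(_ X HX); rewrite iX.
move=> B; apply/idP/idP.
- move=> HB; have : B :\ i \in [set X :\ i | X in N'] by apply: imset_f.
  rewrite -Hc => /imsetP [Y]; rewrite inE => /andP [HY iY] EB.
  by rewrite (setD1_inj (allin _ HB) iY EB) HY iY.
- case/andP => HB iB; have : B :\ i \in [set X :\ i | X in N & i \in X].
    by apply/imsetP; exists B => //; rewrite inE HB iB.
  rewrite Hc => /imsetP [Y HY EB].
  by rewrite (setD1_inj iB (allin _ HY) EB).
Qed.

Lemma S2 (E : finType) d (N N' : {set {set E}}) i :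
  is_matroid_rank d N -> is_matroid_rank d N' -> mcontract N i = mdelete N' i ->
  (forall B, B \in N -> i \notin B) -> forall B, (B \in N) = (B \in N') && (i \notin B).
Proof.
move=> HM HM' Hc Hno.
have Hcard := bases_card HM; have Hcard' := bases_card HM'.
have Hex : [exists X in N, i \in X] = false.
  apply/negbTE; rewrite negb_exists_in; apply/forall_inP => X HX; exact: Hno.
move: Hc; rewrite /mcontract /mdelete Hex.
case: ifP => [_ -> B|Hno' Hc]; first by rewrite inE.
have HN : N != set0 by case: HM => [[]].
case/set0Pn: HN => B HB.
have allin : forall X, X \in N' -> i \in X.
  move=> X HX; apply/negPn/negP => iX; move/negbT: Hno'; rewrite negb_exists_in.
  by move/forall_inP => /(_ X HX); rewrite iX.
move: (HB); rewrite Hc => /imsetP [Y HY EB].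
have := Hcard B HB; have := Hcard' Y HY; rewrite EB (cardsD1 i Y) allin //; lia.
Qed.

Definition mstep (E : finType) d (N N' : {set {set E}}) i :=
  [/\ is_matroid_rank d N, is_matroid_rank d N' & mcontract N i = mdelete N' i].

Lemma cardIU1 (E : finType) (B Y : {set E}) i : i \notin Y ->
  #|B :&: (i |: Y)| = (i \in B) + #|B :&: Y|.
Proof.
move=> iY; case iB: (i \in B).
  have -> : B :&: (i |: Y) = i |: (B :&: Y).
    apply/setP => u; rewrite !inE; case: (u =P i) => [->|]; by rewrite ?iB.
  by rewrite cardsU1 inE (negbTE iY) andbF.
have -> // : B :&: (i |: Y) = B :&: Y.
apply/setP => u; rewrite !inE; case: (u =P i) => [->|] //=; by rewrite iB.
Qed.

Lemma rk_nonempty (E : finType) d (N : {set {set E}}) : is_matroid_rank d N -> N != set0.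
Proof. by case=> [[]]. Qed.

Lemma step_mono1 (E : finType) d (N N' : {set {set E}}) i (X : {set E}) :
  mstep d N N' i -> i \in X -> rk N X <= rk N' X.
Proof.
case=> HM HM' Hc iX.
case: (boolP [exists B in N, i \in B]) => [/exists_inP [C HC iC]|Hno].
  have HS := S1 HM HM' Hc (ex_intro2 _ _ C HC iC).
  have [B HB /andP [iB Hle]] := F1 HM iX HC iC.
  apply: (leq_trans Hle); apply: rk_ge; by rewrite HS HB iB.
have Hno' : forall B, B \in N -> i \notin B.
  move=> B HB; apply/negP => iB; move/negP: Hno; apply; apply/exists_inP; by exists B.
have HS := S2 HM HM' Hc Hno'.
apply: rk_sub => B; rewrite HS; by case/andP.
Qed.

Lemma step_mono2 (E : finType) d (N N' : {set {set E}}) i (X : {set E}) :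
  mstep d N N' i -> i \notin X -> rk N' X <= rk N X.
Proof.
case=> HM HM' Hc iX.
case: (boolP [exists B in N, i \in B]) => [/exists_inP [C HC iC]|Hno].
  have HS := S1 HM HM' Hc (ex_intro2 _ _ C HC iC).
  apply: rk_sub => B; rewrite HS; by case/andP.
have Hno' : forall B, B \in N -> i \notin B.
  move=> B HB; apply/negP => iB; move/negP: Hno; apply; apply/exists_inP; by exists B.
have HS := S2 HM HM' Hc Hno'.
case/set0Pn: (rk_nonempty HM) => C HC.
move: (HC); rewrite HS => /andP [HC' iC].
have [B HB /andP [iB Hle]] := F2 HM' iX HC' iC.
apply: (leq_trans Hle); apply: rk_ge; by rewrite HS HB iB.
Qed.

Lemma step_rank (E : finType) d (N N' : {set {set E}}) i (Y : {set E}) :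
  mstep d N N' i -> i \notin Y -> (rk N' Y + rk N [set i] = rk N (i |: Y))%N.
Proof.
case=> HM HM' Hc iY.
case: (boolP [exists B in N, i \in B]) => [/exists_inP [C HC iC]|Hno].
  have HS := S1 HM HM' Hc (ex_intro2 _ _ C HC iC).
  have Hi : rk N [set i] = 1%N.
    apply/eqP; rewrite eqn_leq; apply/andP; split.
      apply: rk_le => B _; rewrite -(cards1 i); apply: subset_leq_card; exact: subsetIr.
    apply: leq_trans _ (rk_ge _ HC); by rewrite (cardsD1 i) !inE iC eqxx.
  rewrite Hi; apply/eqP; rewrite eqn_leq; apply/andP; split.
    have [B' HB' ->] := rk_att Y (rk_nonempty HM').
    move: (HB'); rewrite HS => /andP [HB iB].
    apply: leq_trans _ (rk_ge _ HB); by rewrite cardIU1 // iB addnC.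
  have [B HB /andP [iB Hle]] := F1 HM (setU11 i Y) HC iC.
  apply: (leq_trans Hle); rewrite cardIU1 // iB addnC leq_add2r.
  apply: rk_ge; by rewrite HS HB iB.
have Hno' : forall B, B \in N -> i \notin B.
  move=> B HB; apply/negP => iB; move/negP: Hno; apply; apply/exists_inP; by exists B.
have HS := S2 HM HM' Hc Hno'.
have Hi : rk N [set i] = 0%N.
  apply/eqP; rewrite -leqn0; apply: rk_le => B HB; rewrite leqn0 cards_eq0; apply/eqP.
  apply/setP => u; rewrite !inE; case: (u =P i) => [->|]; by rewrite ?andbF ?(negbTE (Hno' _ HB)).
have E1 : rk N (i |: Y) = rk N Y.
  rewrite /rk; apply: eq_bigr => B HB; by rewrite cardIU1 // (negbTE (Hno' _ HB)).
rewrite Hi addn0 E1; apply/eqP; rewrite eqn_leq; apply/andP; split.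
  case/set0Pn: (rk_nonempty HM) => C HC.
  move: (HC); rewrite HS => /andP [HC' iC].
  have [B HB /andP [iB Hle]] := F2 HM' iY HC' iC.
  apply: (leq_trans Hle); apply: rk_ge; by rewrite HS HB iB.
apply: rk_sub => B; rewrite HS; by case/andP.
Qed.

Lemma sep_card (E : finType) d (N : {set {set E}}) (J : {set E}) :
  is_matroid_rank d N -> (rk N J + rk N (~: J) = d)%N ->
  forall B, B \in N -> #|B :&: J| = rk N J /\ #|B :&: ~: J| = rk N (~: J).
Proof.
move=> HM Hs B HB.
have H1 := cardsID J B; rewrite setDE (bases_card HM HB) in H1.
have H2 := rk_ge J HB; have H3 := rk_ge (~: J) HB. lia.
Qed.

Lemma sep_exch (E : finType) d (N : {set {set E}}) (J : {set E}) :
  is_matroid_rank d N -> (rk N J + rk N (~: J) = d)%N ->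
  forall n (B1 B2 : {set E}), #|[set x | (x \notin J) && (x \in B1) && (x \notin B2)]| = n ->
  B1 \in N -> B2 \in N ->
  exists2 B, B \in N & (forall x, x \in J -> (x \in B) = (x \in B1)) /\
                       (forall x, x \notin J -> (x \in B) = (x \in B2)).
Proof.
move=> HM Hs; have Hsc := sep_card HM Hs.
have [[_ HBE] _] := HM.
elim=> [|n IH] B1 B2 Hn HB1 HB2.
  exists B1 => //; split => // x xJ.
  have Hsub : B1 :&: ~: J \subset B2 :&: ~: J.
    apply/subsetP => u; rewrite !inE => /andP [uB1 uJ]; rewrite uJ andbT.
    apply/negPn/negP => uB2.
    have : u \in [set x | (x \notin J) && (x \in B1) && (x \notin B2)] by rewrite inE uJ uB1 uB2.
    by move/eqP: Hn; rewrite cards_eq0 => /eqP ->; rewrite inE.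
  have : B1 :&: ~: J == B2 :&: ~: J.
    rewrite eqEcard Hsub /=. by rewrite (proj2 (Hsc _ HB1)) (proj2 (Hsc _ HB2)).
  move/eqP/setP => /(_ x); rewrite !inE xJ !andbT => ->. done.
have : 0 < #|[set x | (x \notin J) && (x \in B1) && (x \notin B2)]| by rewrite Hn.
rewrite card_gt0 => /set0Pn [x]; rewrite inE => /andP [/andP [xJ xB1] xB2].
have Hx : x \in B1 :\: B2 by rewrite inE xB1 xB2.
have [y Hy HB1'] := HBE B1 B2 HB1 HB2 x Hx.
move: Hy; rewrite inE => /andP [yB1 yB2].
have Nxy : x != y by apply/eqP => Exy; move: yB1; rewrite -Exy xB1.
have yJ : y \notin J.
  apply/negP => yJ.
  have Eq : (y |: (B1 :\ x)) :&: ~: J = (B1 :&: ~: J) :\ x.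
    apply/setP => u; rewrite !inE; case: (u =P y) => [->|_] /=; first by rewrite yJ /= ?andbF.
    by case: (u != x); case: (u \in B1).
  have := proj2 (Hsc _ HB1'); have := proj2 (Hsc _ HB1).
  rewrite Eq (cardsD1 x (B1 :&: ~: J)) !inE xB1 xJ /=. lia.
have Hn' : #|[set u | (u \notin J) && (u \in y |: (B1 :\ x)) && (u \notin B2)]| = n.
  have -> : [set u | (u \notin J) && (u \in y |: (B1 :\ x)) && (u \notin B2)] =
            [set u | (u \notin J) && (u \in B1) && (u \notin B2)] :\ x.
    apply/setP => u; rewrite !inE; case: (u =P y) => [->|_] /=; first by rewrite yB2 !andbF.
    by case: (u != x); case: (u \in J); case: (u \in B1); case: (u \in B2).
  move: Hn; rewrite (cardsD1 x [set x | _]) !inE xJ xB1 xB2 /=. lia.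
have [B HB [H1 H2]] := IH _ _ Hn' HB1' HB2.
exists B => //; split => // u uJ.
rewrite H1 // !inE; case: (u =P y) => [Euy|_] /=; first by move: yJ; rewrite -Euy uJ.
case: (u =P x) => [Eux|_] //=; by move: xJ; rewrite -Eux uJ.
Qed.

Lemma rk_union_le (E : finType) (N : {set {set E}}) (Y Z : {set E}) :
  rk N (Y :|: Z) <= rk N Y + rk N Z.
Proof.
apply: rk_le => B HB; rewrite setIUr.
apply: leq_trans (leq_card_setU _ _) _. by apply: leq_add; apply: rk_ge.
Qed.

Lemma sep_DS (E : finType) d (N : {set {set E}}) (J Y Z : {set E}) :
  is_matroid_rank d N -> (rk N J + rk N (~: J) = d)%N ->
  Y \subset ~: J -> Z \subset J -> rk N (Y :|: Z) = (rk N Y + rk N Z)%N.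
Proof.
move=> HM Hs HY HZ.
apply/eqP; rewrite eqn_leq rk_union_le /=.
have HN := rk_nonempty HM.
have [B1 HB1 E1] := rk_att Z HN; have [B2 HB2 E2] := rk_att Y HN.
have [B HB [H1 H2]] := sep_exch HM Hs (erefl _) HB1 HB2.
apply: leq_trans _ (rk_ge _ HB).
have EZ : B :&: Z = B1 :&: Z.
  apply/setP => u; rewrite !inE; case uZ: (u \in Z); last by rewrite !andbF.
  by rewrite H1 // (subsetP HZ).
have EY : B :&: Y = B2 :&: Y.
  apply/setP => u; rewrite !inE; case uY: (u \in Y); last by rewrite !andbF.
  by rewrite H2 //; have := subsetP HY u uY; rewrite inE.
have Hd : (B :&: Y) :&: (B :&: Z) = set0.
  apply/setP => u; rewrite !inE; case uY: (u \in Y) => //; case uZ: (u \in Z); rewrite ?andbF //.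
  by have := subsetP HY u uY; rewrite inE (subsetP HZ u uZ).
have := cardsUI (B :&: Y) (B :&: Z); rewrite Hd cards0 addn0 -setIUr => ->.
by rewrite EY EZ E1 E2 addnC.
Qed.

Lemma rk_ext (E : finType) d (N N' : {set {set E}}) :
  is_matroid_rank d N -> is_matroid_rank d N' -> (forall X, rk N X = rk N' X) -> N = N'.
Proof.
suff H : forall (N N' : {set {set E}}), is_matroid_rank d N -> is_matroid_rank d N' ->
   (forall X, rk N X = rk N' X) -> forall B, B \in N -> B \in N'.
  move=> HM HM' Hr; apply/setP => B; apply/idP/idP; first exact: H.
  by apply: H => // X; rewrite Hr.
move=> {}N {}N' HM HM' Hr B HB.
have Hd : d <= rk N' B by rewrite -Hr -(bases_card HM HB) -{1}(setIid B); apply: rk_ge.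
have [B' HB' E1] := rk_att B (rk_nonempty HM').
have C1 : B' :&: B == B'.
  rewrite eqEcard subsetIl /=. by rewrite -E1 (bases_card HM' HB').
have C2 : B' == B.
  rewrite eqEcard (bases_card HM' HB') (bases_card HM HB) leqnn andbT.
  by rewrite -(eqP C1) subsetIr.
by rewrite -(eqP C2).
Qed.

Import Order.TTheory Num.Theory.
Local Open Scope ring_scope.

Lemma exists_max (E : finType) (f : E -> int) (j : E) : exists j0, forall k, f k <= f j0.
Proof.
have [j0 _ H] := @Order.TotalTheory.arg_maxP _ int E j predT f isT.
exists j0 => k; exact: H.
Qed.

Definition cst (E : finType) (c : int) : {ffun E -> int} := [ffun => c].

Lemma Mshift (E : finType) d (M : {ffun E -> int} -> {set {set E}}) :
  is_matroid_flock d M -> forall a c, M (a + cst E c) = M a.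
Proof.
case=> _ [_ H2] a c.
have Hp : forall n : nat, forall a, M (a + cst E n%:Z) = M a.
  elim=> [|n IH] b.
    by congr M; apply/ffunP => j; rewrite !ffunE addr0.
  rewrite -(IH b) (H2 (b + cst E n)); congr M; apply/ffunP => j; by rewrite !ffunE inE /= -addn1 PoszD addrA.
case: c => n; first exact: Hp.
rewrite -(Hp n.+1 (a + cst E (Negz n))); congr M; apply/ffunP => j; by rewrite !ffunE NegzE addrNK.
Qed.

Lemma flock_step (E : finType) d (M : {ffun E -> int} -> {set {set E}}) :
  is_matroid_flock d M -> forall a i, mstep d (M a) (M (a + unitv i)) i.
Proof. by case=> H1 [H2 _] a i; split. Qed.

Lemma sum_abs_upd (E : finType) (u w : {ffun E -> int}) j :
  (forall k, k != j -> w k = u k) ->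
  ((\sum_k absz (w k)) + absz (u j) = (\sum_k absz (u k)) + absz (w j))%N.
Proof.
move=> H; rewrite [(\sum_k absz (w k))%N](bigD1 j) // [(\sum_k absz (u k))%N](bigD1 j) //=.
rewrite (eq_bigr (fun k => absz (u k))); last by move=> k /H ->.
move: (absz (w j)) (absz (u j)) (\sum_(i | i != j) absz (u i))%N => x y z; lia.
Qed.

Lemma mono_vec (E : finType) d (M : {ffun E -> int} -> {set {set E}}) (X : {set E}) :
  is_matroid_flock d M -> forall n a (v : {ffun E -> int}),
  (\sum_k absz (v k))%N = n -> (forall j, j \in X -> 0 <= v j) ->
  (forall j, j \notin X -> v j <= 0) -> (rk (M a) X <= rk (M (a + v)%R) X)%N.
Proof.
move=> HF; elim=> [|n IH] a v Hn Hpos Hneg.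
  have -> : v = 0.
    apply/ffunP => k; rewrite ffunE; move/eqP: Hn; rewrite sum_nat_eq0 => /forallP /(_ k).
    by rewrite absz_eq0 => /eqP.
  by rewrite addr0.
have [j Hj] : exists j, v j != 0.
  case: (boolP [exists j, v j != 0]) => [/existsP //|]; rewrite negb_exists => /forallP H.
  move: Hn; have -> : (\sum_k absz (v k))%N = 0%N.
    by apply: big1 => k _; have := H k; rewrite negbK => /eqP ->.
  by [].
case: (ltrP 0 (v j)) => Hvj.
- have jX : j \in X by apply/negPn/negP => /Hneg; lia.
  pose v' := v - unitv j.
  have Hv' : (\sum_k absz (v' k))%N = n.
    have Hw : forall k, k != j -> v' k = v k.
      move=> k kj; by rewrite /v' !ffunE (negbTE kj) subr0.
    have := sum_abs_upd Hw; rewrite Hn.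
    have -> : v' j = v j - 1 by rewrite /v' !ffunE eqxx.
    move: (\sum_k absz (v' k))%N => S; lia.
  have H1 := IH a v' Hv'.
  have : (rk (M a) X <= rk (M (a + v')%R) X)%N.
    apply: H1 => k; rewrite /v' !ffunE; case: (k =P j) => [->|_] /=.
    + move=> _; lia.
    + move=> /Hpos; lia.
    + by move=> /Hneg; lia.
    + by move=> /Hneg; lia.
  move=> H2; apply: (leq_trans H2).
  have := step_mono1 (flock_step HF (a + v') j) jX.
  by rewrite /v' addrA addrNK.
- have Hvj' : v j < 0 by rewrite lt_neqAle Hj Hvj.
  have jX : j \notin X by apply/negP => /Hpos; lia.
  pose v' := v + unitv j.
  have Hv' : (\sum_k absz (v' k))%N = n.
    have Hw : forall k, k != j -> v' k = v k.
      move=> k kj; by rewrite /v' !ffunE (negbTE kj) addr0.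
    have := sum_abs_upd Hw; rewrite Hn.
    have -> : v' j = v j + 1 by rewrite /v' !ffunE eqxx.
    move: (\sum_k absz (v' k))%N => S; lia.
  have H1 := IH a v' Hv'.
  have : (rk (M a) X <= rk (M (a + v')%R) X)%N.
    apply: H1 => k; rewrite /v' !ffunE; case: (k =P j) => [->|_] /=.
    + by move=> Hk; rewrite Hk in jX.
    + move=> /Hpos; lia.
    + move=> _; lia.
    + by move=> /Hneg; lia.
  move=> H2; apply: (leq_trans H2).
  have := step_mono2 (flock_step HF (a + v) j) jX.
  by rewrite /v' addrA.
Qed.

Lemma rk_full (E : finType) d (N : {set {set E}}) : is_matroid_rank d N -> rk N [set: E] = d.
Proof.
move=> HM; apply/eqP; rewrite eqn_leq; apply/andP; split.
  by apply: rk_le => B HB; rewrite setIT (bases_card HM HB).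
case/set0Pn: (rk_nonempty HM) => B HB.
by apply: leq_trans _ (rk_ge _ HB); rewrite setIT (bases_card HM HB).
Qed.

Lemma rk_set0 (E : finType) (N : {set {set E}}) : rk N set0 = 0%N.
Proof. by apply/eqP; rewrite -leqn0; apply: rk_le => B _; rewrite setI0 cards0. Qed.

Lemma genG (E : finType) d (M : {ffun E -> int} -> {set {set E}}) :
  is_matroid_flock d M -> forall n (J : {set E}), #|J| = n -> forall a (Y : {set E}),
  Y \subset ~: J -> (rk (M (a + indv J)%R) Y + rk (M a) J = rk (M a) (Y :|: J))%N.
Proof.
move=> HF; elim=> [|n IH] J HJ a Y HY.
  move/eqP: HJ; rewrite cards_eq0 => /eqP ->.
  have -> : indv (set0 : {set E}) = 0 by apply/ffunP => x; rewrite !ffunE inE.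
  by rewrite addr0 rk_set0 setU0 addn0.
have : (0 < #|J|)%N by rewrite HJ.
rewrite card_gt0 => /set0Pn [j jJ].
pose J' := J :\ j.
have HJ' : #|J'| = n by move: HJ; rewrite (cardsD1 j J) jJ; case.
pose a' := a + indv J'.
have Ea : a + indv J = a' + unitv j.
  apply/ffunP => x; rewrite /a' !ffunE -addrA; congr (_ + _).
  case: (boolP (x == j)) => Hx.
    by move/eqP: Hx => ->; rewrite setD11 jJ add0r.
  by rewrite in_setD1 Hx addr0.
have jY : j \notin Y by apply/negP => /(subsetP HY); rewrite inE jJ.
have H1 := step_rank (flock_step HF a' j) jY.
have HY1 : [set j] \subset ~: J' by apply/subsetP => x; rewrite !inE => ->.
have HY2 : j |: Y \subset ~: J'.
  apply/subsetP => x; rewrite !inE => /orP [/eqP -> | /(subsetP HY)]; first by rewrite ?eqxx.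
  by rewrite !inE => xJ; rewrite (negbTE xJ) ?andbF.
have H2 := IH J' HJ' a _ HY1.
have H3 := IH J' HJ' a _ HY2.
rewrite -/a' in H2 H3.
have E2 : [set j] :|: J' = J by rewrite /J' setD1K.
have E3 : (j |: Y) :|: J' = Y :|: J.
  apply/setP => x; rewrite !inE; case: (x =P j) => [->|_] /=; by rewrite ?jJ ?orbT.
rewrite E2 in H2; rewrite E3 in H3; rewrite Ea.
lia.
Qed.

Lemma monoV (E : finType) d (M : {ffun E -> int} -> {set {set E}}) (X : {set E}) a (v : {ffun E -> int}) :
  is_matroid_flock d M -> (forall j, j \in X -> 0 <= v j) ->
  (forall j, j \notin X -> v j <= 0) -> (rk (M a) X <= rk (M (a + v)%R) X)%N.
Proof. move=> HF; exact: (@mono_vec E d M X HF _ a v (erefl _)). Qed.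

Lemma step_lemma (E : finType) d (M : {ffun E -> int} -> {set {set E}}) a b (R : int) :
  is_matroid_flock d M -> M a = M b -> (forall j, b j - a j <= R) ->
  M (a + indv [set j | b j - a j == R]) = M a.
Proof.
move=> HF Eab Hmax.
set J := [set j | b j - a j == R].
have HJ : forall j, (j \in J) = (b j - a j == R) by move=> j; rewrite inE.
set g := a + indv J.
have HMa := (proj1 HF) a; have HMg := (proj1 HF) g.
pose v1 : {ffun E -> int} := [ffun j => (j \in J)%:R - 1].
have Eg1 : M (a + v1) = M g.
  rewrite -(Mshift HF (a + v1) 1); congr M; apply/ffunP => j; rewrite !ffunE. lia.
pose w : {ffun E -> int} := [ffun j => b j - g j - (R - 1)].
have Eg2 : M (g + w) = M a.
  rewrite Eab -(Mshift HF (g + w) (R - 1)); congr M; apply/ffunP => j; rewrite !ffunE; lia.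
have Eg3 : M (g + (- indv J)) = M a.
  by congr M; rewrite /g addrK.
have Eg4 : M (b + (- w)) = M g.
  rewrite -(Mshift HF g (R - 1)); congr M; apply/ffunP => j; rewrite !ffunE. ring.
have wJ : forall j, j \in J -> w j = 0.
  move=> j; rewrite HJ /w /g !ffunE HJ => /eqP H; rewrite H /=. lia.
have wnJ : forall j, j \notin J -> w j <= 0.
  move=> j; rewrite /w /g !ffunE HJ => H; rewrite (negbTE H) /=.
  have := Hmax j; move: H => /eqP H. lia.
have E1 : forall Z : {set E}, Z \subset J -> rk (M g) Z = rk (M a) Z.
  move=> Z HZ; apply/eqP; rewrite eqn_leq; apply/andP; split.
    rewrite -Eg2; apply: (monoV _ HF) => // j jZ.
      by rewrite wJ // (subsetP HZ).
    case: (boolP (j \in J)) => jJ; [by rewrite wJ | exact: wnJ].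
  rewrite -Eg1; apply: (monoV _ HF) => // j.
    move=> /(subsetP HZ) jJ; rewrite /v1 !ffunE jJ /=. lia.
  move=> _; rewrite /v1 !ffunE; case: (j \in J) => /=; lia.
have E2 : rk (M g) (~: J) = rk (M a) (~: J).
  apply/eqP; rewrite eqn_leq; apply/andP; split.
    rewrite -Eg3; apply: (monoV _ HF) => // j.
      by rewrite inE => jJ; rewrite !ffunE (negbTE jJ) /=; lia.
    by rewrite inE negbK => jJ; rewrite !ffunE jJ /=; lia.
  rewrite -Eg4 Eab; apply: (monoV _ HF) => // j.
    by rewrite inE => /wnJ; rewrite !ffunE; lia.
  by rewrite inE negbK => /wJ; rewrite !ffunE => ->; lia.
have G3 := genG HF (erefl _) a (subxx (~: J)).
rewrite -/g setUC setUCr (rk_full HMa) E2 in G3.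
have Sa : (rk (M a) J + rk (M a) (~: J) = d)%N by lia.
have Sg : (rk (M g) J + rk (M g) (~: J) = d)%N by rewrite E1 // E2.
apply: (rk_ext HMg HMa) => X.
have HY : X :&: ~: J \subset ~: J by apply: subsetIr.
have HZ : X :&: J \subset J by apply: subsetIr.
have EX : X = (X :&: ~: J) :|: (X :&: J) by rewrite setUC -setDE setID.
rewrite EX (sep_DS HMg Sg HY HZ) (sep_DS HMa Sa HY HZ) (E1 _ HZ).
have G4 := genG HF (erefl _) a HY.
rewrite -/g (sep_DS HMa Sa HY (subxx J)) in G4.
lia.
Qed.

Definition Walk (E : finType) (M : {ffun E -> int} -> {set {set E}}) (a b : {ffun E -> int}) :=
  exists (k : nat) (gamma : nat -> {ffun E -> int}),
    [/\ gamma 0%N = a, gamma k = b,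
        (forall i, (i <= k)%N -> M (gamma i) = M a) &
        (forall i, (0 < i <= k)%N -> exists J : {set E},
           gamma i - gamma i.-1 = indv J \/ gamma i - gamma i.-1 = - indv J)].

Lemma walk_refl (E : finType) (M : {ffun E -> int} -> {set {set E}}) a : Walk M a a.
Proof. exists 0%N, (fun _ => a); split => // i Hi; exfalso; lia. Qed.

Lemma walk_cons (E : finType) (M : {ffun E -> int} -> {set {set E}}) a g b J :
  M g = M a -> g - a = indv J -> Walk M g b -> Walk M a b.
Proof.
move=> Eg Hd [k [gam [H0 Hk HM HS]]].
exists k.+1, (fun i => if i is i'.+1 then gam i' else a); split => //.
  by case=> [|i] //= Hi; rewrite HM // Eg.
case=> [|[|i]] //= Hi.
  by exists J; left; rewrite H0.
exact: (HS i.+1).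
Qed.

Lemma walk_snoc (E : finType) (M : {ffun E -> int} -> {set {set E}}) a g b J :
  M b = M a -> b - g = - indv J -> Walk M a g -> Walk M a b.
Proof.
move=> Eb Hd [k [gam [H0 Hk HM HS]]].
exists k.+1, (fun i => if (i <= k)%N then gam i else b); split => //=.
- by rewrite ltnn.
- move=> i Hi; case: ifP => Hik; [exact: HM | by []].
- move=> i /andP [Hi0 Hi]; case: ifP => Hik.
    have Hi' : (i.-1 <= k)%N by apply: leq_trans (leq_pred i) Hik.
    rewrite Hi'; apply: HS; by rewrite Hi0.
  have Ei : i = k.+1 by apply/eqP; rewrite eqn_leq Hi ltnNge Hik.
  rewrite Ei /= leqnn Hk; by exists J; right.
Qed.

Lemma sum_dec (E : finType) (f : E -> int) R j0 :
  0 < R -> (forall j, f j <= R) -> f j0 = R ->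
  ((\sum_j absz (f j - (f j == R)%:R)).+1 <= \sum_j absz (f j))%N.
Proof.
move=> HR Hmax Hj0.
rewrite [X in (X.+1 <= _)%N](bigD1 j0) //= [X in (_ <= X)%N](bigD1 j0) //=.
rewrite Hj0 eqxx -addSn; apply: leq_add; first by lia.
apply: leq_sum => j _; case: (f j =P R) => [->|_] /=; lia.
Qed.

Lemma walk_ex (E : finType) d (M : {ffun E -> int} -> {set {set E}}) :
  is_matroid_flock d M -> forall n (a b : {ffun E -> int}), (\sum_j absz (b j - a j) <= n)%N -> M a = M b -> Walk M a b.
Proof.
move=> HF; elim=> [|n IH] a b Hs Hab.
- have -> : b = a.
    apply/ffunP => j; move: Hs; rewrite leqn0 sum_nat_eq0 => /forallP /(_ j).
    by rewrite absz_eq0 subr_eq0 => /eqP.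
  exact: walk_refl.
case: (boolP [exists j, 0 < b j - a j]) => [/existsP [j1 Hj1]|Hn1].
  have [j0 Hj0] := exists_max (fun j => b j - a j) j1.
  set R := b j0 - a j0.
  set J := [set j | b j - a j == R].
  have HMg := step_lemma HF Hab Hj0.
  apply: (walk_cons HMg (J := J)); first by rewrite addrC addKr.
  apply: IH; last by rewrite HMg.
  have HR : 0 < R by have := Hj0 j1; lia.
  have H1 := sum_dec HR Hj0 (erefl _).
  have Eq : (\sum_j absz (b j - (a + indv J)%R j)%R)%N = (\sum_j absz (b j - a j - (b j - a j == R)%:R)%R)%N.
    by apply: eq_bigr => j _; rewrite !ffunE inE; congr absz; ring.
  by rewrite Eq -ltnS (leq_trans H1 Hs).
case: (boolP [exists j, 0 < a j - b j]) => [/existsP [j1 Hj1]|Hn2].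
  have [j0 Hj0] := exists_max (fun j => a j - b j) j1.
  set R := a j0 - b j0.
  set J := [set j | a j - b j == R].
  have HMg := step_lemma HF (esym Hab) Hj0.
  apply: (walk_snoc (g := b + indv J) (J := J)); first by rewrite Hab.
    by rewrite opprD addrA subrr add0r.
  apply: IH; last by rewrite HMg.
  have HR : 0 < R by have := Hj0 j1; lia.
  have H1 := sum_dec HR Hj0 (erefl _).
  have Eq : (\sum_j absz ((b + indv J)%R j - a j)%R)%N = (\sum_j absz (a j - b j - (a j - b j == R)%:R)%R)%N.
    by apply: eq_bigr => j _; rewrite !ffunE inE -abszN; congr absz; ring.
  have Eq2 : (\sum_j absz (a j - b j)%R)%N = (\sum_j absz (b j - a j)%R)%N.
    by apply: eq_bigr => j _; rewrite -abszN opprB.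
  rewrite Eq -ltnS; rewrite -Eq2 in Hs; exact: leq_trans H1 Hs.
have -> : b = a.
  apply/ffunP => j; move: Hn1 Hn2; rewrite !negb_exists => /forallP /(_ j) H1 /forallP /(_ j) H2.
  lia.
exact: walk_refl.
Qed.

Unset Implicit Arguments.

Theorem mainTheorem16 (E : finType) (d : nat)
    (M : {ffun E -> int} -> {set {set E}}) :
  is_matroid_flock d M ->
  forall alpha beta : {ffun E -> int}, M alpha = M beta ->
  exists (k : nat) (gamma : nat -> {ffun E -> int}),
    [/\ gamma 0%N = alpha, gamma k = beta,
        (forall i, (i <= k)%N -> M (gamma i) = M alpha) &
        (forall i, (0 < i <= k)%N -> exists J : {set E},
           gamma i - gamma i.-1 = indv J \/ gamma i - gamma i.-1 = - indv J)].
Proof.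
move=> HF alpha beta Hab.
exact: (walk_ex HF (leqnn _) Hab).
Qed.
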